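(* Let $s(\cdot)\in\mathcal{P}(\mathbb{R})$ with $s(x)=s_0>2$ for all $x\in[0,1]$. Then the kernel $K(x,y)=K_1(x-y)K_2(y)$ does not belong to $H_{s(\cdot),1}$.
   Context: Here $n=1$. Fix $\beta>0$; $K_1(t)=\chi_{[2,3]}(t)$ and $K_2(t)=t^{-1/2}\big[\log(e/t)\big]^{-\frac{1+\beta}{2}}\chi_{(0,1)}(t)$. Cubes are intervals $Q$; $mQ$ is the concentric interval of length $m\ell(Q)$. $\mathcal{P}(\mathbb{R})$: measurable $p(\cdot):\mathbb{R}\to[1,\infty]$; $\|f\|_{p(\cdot)}=\inf\{\lambda>0:\int_{\{p<\infty\}}|f/\lambda|^{p(x)}dx+\|(f/\lambda)\chi_{\{p=\infty\}}\|_\infty\le1\}$. $K\in H_{s(\cdot),1}$ means $\sup_Q\sup_{x,z\in\frac12Q}\sum_{m\ge1}2^m\ell(Q)\frac{\|[K(x,\cdot)-K(z,\cdot)]\chi_{2^mQ\setminus2^{m-1}Q}\|_{s(\cdot)}}{\|\chi_{2^mQ}\|_{s(\cdot)}}<\infty$ (in particular all terms must be finite). *)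

(* Defs.v *)
From HB Require Import structures.
From mathcomp Require Import all_boot all_order all_algebra.
From mathcomp Require Import all_classical all_reals all_analysis measurable_realfun ess_sup_inf.
Set Implicit Arguments. Unset Strict Implicit. Unset Printing Implicit Defensive.
Import Order.TTheory GRing.Theory Num.Theory.
Import numFieldNormedType.Exports.
Local Open Scope classical_set_scope.
Local Open Scope ring_scope.

Section Defs.
Variable R : realType.

Definition var_exponent (p : R -> \bar R) : Prop :=
  measurable_fun [set: R] p /\ (forall x, (1 <= p x)%E).

Definition var_modular (p : R -> \bar R) (f : R -> R) (lam : R) : \bar R :=
  (\int[@lebesgue_measure R]_(x in [set x | (p x < +oo)%E])
      ((`|f x| / lam) `^ fine (p x))%:E
   + ess_sup (@lebesgue_measure R)
       (fun x => if p x == +oo%E then (`|f x| / lam)%:E else 0%E))%E.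

(* Luxemburg norm ||f||_{p(.)} (inf of empty set = +oo) *)
Definition var_norm (p : R -> \bar R) (f : R -> R) : \bar R :=
  ereal_inf [set lam%:E | lam in
             [set lam : R | 0 < lam /\ (var_modular p f lam <= 1)%E]].

Definition K1 (t : R) : R := if (2 <= t <= 3) then 1 else 0.

Definition K2 (beta : R) (t : R) : R :=
  if (0 < t < 1) then
    t `^ (- (1 / 2)) * (ln (expR 1 / t)) `^ (- ((1 + beta) / 2))
  else 0.

Definition cube (c l : R) : set R := [set y | c - l / 2 <= y <= c + l / 2].

Definition in_H (s : R -> \bar R) (K : R -> R -> R) : Prop :=
  exists C : R, forall (c l : R), 0 < l ->
    forall x z, cube c (l / 2) x -> cube c (l / 2) z ->
    (\sum_(1 <= m <oo)
        ((2 ^+ m * l)%R%:E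
         * var_norm s (fun y => ((K x y - K z y)
              * \1_(cube c (2 ^+ m * l) `\` cube c (2 ^+ m.-1 * l)) y)%R)
         / var_norm s (\1_(cube c (2 ^+ m * l)) : R -> R))
     <= C%:E)%E.

End Defs.

(* Main.v *)
Require Import Defs.
From HB Require Import structures.
From mathcomp Require Import all_boot all_order all_algebra.
From mathcomp Require Import all_classical all_reals all_analysis measurable_realfun ess_sup_inf.
From mathcomp Require Import ring lra.
Import Order.TTheory GRing.Theory Num.Theory.
Local Open Scope classical_set_scope.
Local Open Scope ring_scope.

Section H.
Variable R : realType.

Lemma ln_bound (eps u : R) : 0 < eps -> 0 <= u ->
  ln (1 + u) <= eps * (1 + u) - 1 - ln eps.
Proof.
move=> e0 u0.
have h := @le_ln1Dx R (eps * (1 + u) - 1).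
have : -1 < eps * (1 + u) - 1.
  have : 0 < eps * (1 + u) by apply: mulr_gt0 => //; lra.
  lra.
move=> /h; rewrite addrCA subrr addr0 lnM ?posrE //; last lra.
lra.
Qed.

Lemma K2_big (beta s0 lam : R) : 0 < beta -> 2 < s0 -> 0 < lam ->
  exists a : R, 0 < a /\ a <= 4^-1 /\
   forall y, a <= y <= 2 * a -> 2 / a <= (K2 beta y / lam) `^ s0.
Proof.
move=> b0 s2 l0.
pose b := (1 + beta) / 2.
pose p := s0 / 2 - 1.
pose eps := p / (2 * s0 * b).
have bp : 0 < b by rewrite /b; lra.
have pp : 0 < p by rewrite /p; lra.
have ep : 0 < eps by rewrite /eps divr_gt0 // !mulr_gt0 //; lra.
pose K0 := s0 * b * (1 + ln eps) - s0 * ln lam.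
pose U := 2 / p * (2 * ln 2 + p / 2 - K0).
pose v := Num.max U 0 + 3.
have ln2le : ln 2 <= 1 :> R.
  by have := @le_ln1Dx R 1 ltac:(lra); rewrite (_ : 1 + 1 = 2).
have ln2p : 0 < ln 2 :> R by apply: ln_gt0; lra.
have vU : U <= v - 3 by rewrite /v addrK le_max lexx.
have v3 : 3 <= v by rewrite /v ler_wpDl // le_max lexx orbT.
have a0 : 0 < expR (- v) by exact: expR_gt0.
have a4 : expR (- v) <= 4^-1.
  rewrite expRN lef_pV2 ?posrE ?expR_gt0 //.
  apply: le_trans (expR_ge1Dx _); lra.
exists (expR (- v)); split => //; split => // y /andP[ay ya].
have y0 : 0 < y by exact: lt_le_trans a0 ay.
have y1 : y < 1 by lra.
pose u := - ln y.
have uv : u <= v.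
  by rewrite /u lerNl -(expRK (- v)) ler_ln ?posrE.
have vu : v - ln 2 <= u.
  have : ln y <= ln (2 * expR (- v)) by rewrite ler_ln ?posrE ?mulr_gt0.
  by rewrite lnM ?posrE // expRK /u; lra.
have u0 : 0 <= u by rewrite /u oppr_ge0 ln_le0 // ltW.
rewrite /K2 ifT; last by rewrite y0 y1.
have e1 : y `^ (- (1 / 2)) = expR (u / 2).
  by rewrite /powR gt_eqF // /u; congr expR; lra.
have e2 : ln (expR 1 / y) = 1 + u by rewrite ln_div ?posrE ?expR_gt0 // expRK.
have e3 : (1 + u) `^ (- ((1 + beta) / 2)) = expR (- b * ln (1 + u)).
  by rewrite /powR gt_eqF //; lra.
have e4 : lam = expR (ln lam) by rewrite lnK.
rewrite e1 e2 e3 {1}e4 -expRD -expRB -expRM.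
have e5 : 2 / expR (- v) = expR (ln 2 + v).
  by rewrite expRD expRN invrK lnK // posrE.
rewrite e5 ler_expR.
pose L := ln (1 + u).
have hb : L <= eps * (1 + u) - 1 - ln eps by exact: ln_bound.
have sb0 : 0 < s0 * b by apply: mulr_gt0 => //; lra.
have sbe : s0 * b * eps = p / 2.
  have gen : forall q S B : R, S != 0 -> B != 0 -> S * B * (q / (2 * S * B)) = q / 2.
    by move=> q S B S0 B0; field; rewrite B0 S0.
  by rewrite /eps gen //; apply/negP => /eqP; lra.
have key : s0 * b * L <= p / 2 * (1 + u) - s0 * b * (1 + ln eps).
  apply: le_trans (ler_wpM2l (ltW sb0) hb) _.
  by rewrite -sbe le_eqVlt; apply/orP; left; apply/eqP; ring.
have pu : p * U <= p * u by rewrite ler_wpM2l //; [exact: ltW | lra].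
have pU : p * U = 2 * (2 * ln 2 + p / 2 - K0).
  have gen : forall q X : R, q != 0 -> q * (2 / q * X) = 2 * X.
    by move=> q X q0; field.
  rewrite /U gen //; apply/negP => /eqP; lra.
have E : (u / 2 + - b * L - ln lam) * s0 = u + p * u - s0 * b * L - s0 * ln lam.
  have gen : forall (u b L l s0 p : R), p = s0 / 2 - 1 ->
      (u / 2 + - b * L - l) * s0 = u + p * u - s0 * b * L - s0 * l.
    by move=> ? ? ? ? ? ? ->; ring.
  exact: gen.
rewrite -/L E.
have EK : K0 = s0 * b * (1 + ln eps) - s0 * ln lam by [].
lra.
Qed.
Local Notation mu := (@lebesgue_measure R).

Lemma le_int_nm (D : set R) (f g : R -> \bar R) :
  (forall x, D x -> (0 <= f x)%E) -> (forall x, D x -> (f x <= g x)%E) ->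
  (\int[mu]_(x in D) f x <= \int[mu]_(x in D) g x)%E.
Proof.
move=> f0 fg.
have g0 : forall x, D x -> (0 <= g x)%E.
  by move=> x Dx; exact: le_trans (f0 x Dx) (fg x Dx).
rewrite !ge0_integralE //.
apply: ereal_sup_le => _ [h hf <-]; exists h => //= x.
apply: le_trans (hf x) _.
rewrite /patch; case: ifPn => // /[1!inE] Dx; exact: fg.
Qed.

Lemma le_int_sub (A B : set R) (f : R -> \bar R) :
  A `<=` B -> (forall x, B x -> (0 <= f x)%E) ->
  (\int[mu]_(x in A) f x <= \int[mu]_(x in B) f x)%E.
Proof.
move=> AB f0.
have fA : forall x, A x -> (0 <= f x)%E by move=> x /AB; exact: f0.
rewrite !ge0_integralE //.
apply: ereal_sup_le => _ [h hf <-]; exists h => //= x.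
apply: le_trans (hf x) _.
rewrite /patch; case: ifPn => [/[1!inE] Ax|_]; first by rewrite ifT // inE; exact: AB.
by case: ifPn => // /[1!inE] /f0.
Qed.

Lemma muT_gt0 : (0 < mu [set: R])%E.
Proof.
apply: (@lt_le_trans _ _ (mu `[0, 1]%classic)).
  by rewrite lebesgue_measure_itv /= lte01 oppr0 adde0 lte01.
by apply: le_measure; rewrite ?inE.
Qed.

Lemma K2_ge0 (beta y : R) : 0 <= K2 beta y.
Proof. by rewrite /K2; case: ifP => // _; rewrite mulr_ge0 // powR_ge0. Qed.

Lemma norm_inf (beta s0 : R) (s : R -> \bar R) (f : R -> R) :
  0 < beta -> 2 < s0 -> (forall x, 0 <= x <= 1 -> s x = s0%:E) ->
  (forall y, 0 < y <= 2^-1 -> f y = K2 beta y) ->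
  var_norm s f = +oo%E.
Proof.
move=> b0 s2 hs hf.
suff H : forall lam, 0 < lam -> (1 < var_modular s f lam)%E.
  rewrite /var_norm (_ : [set _ | _ in _] = set0) ?ereal_inf0 //.
  apply/seteqP; split => // _ [lam [l0 hl] <-].
  by have := H lam l0; rewrite ltNge hl.
move=> lam l0.
have [a [a0 [a4 ha]]] := @K2_big beta s0 lam b0 s2 l0.
rewrite /var_modular.
apply: (@lt_le_trans _ _ 2%:E); first by rewrite lte_fin ltr1n.
rewrite -[2%:E]adde0; apply: leeD; last first.
  apply: ess_sup_gee; first exact: muT_gt0.
  apply: nearW => x; case: ifP => // _.
  by rewrite lee_fin divr_ge0 // ltW.
have sub : `[a, 2 * a]%classic `<=` [set x | (s x < +oo)%E].
  move=> x /=; rewrite in_itv /= => /andP[ax xa].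
  by rewrite hs ?ltry //; apply/andP; split; lra.
apply: (le_trans _ (@le_int_sub _ _ (fun x => ((`|f x| / lam) `^ fine (s x))%:E) sub _)); last first.
  by move=> x _; rewrite lee_fin powR_ge0.
have -> : 2%:E = (\int[mu]_(x in `[a, (2 * a)%R]%classic) (cst (2 / a)%R%:E) x)%E.
  rewrite integral_cst //= lebesgue_measure_itv /= lte_fin.
  rewrite ifT; last lra.
  rewrite -EFinB -EFinM; congr EFin; field; apply/negP => /eqP; lra.
apply: le_int_nm => x /=; first by rewrite lee_fin divr_ge0 //; lra.
rewrite in_itv /= => /andP[ax xa].
rewrite lee_fin hs; last by apply/andP; split; lra.
rewrite /= hf; last by apply/andP; split; lra.
rewrite ger0_norm ?K2_ge0 //; apply: ha; lra.
Qed.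

Lemma cube_itv (c l : R) : cube c l = `[c - l / 2, c + l / 2]%classic.
Proof. by apply/seteqP; split => x /=; rewrite in_itv. Qed.

Lemma norm_ind (s : R -> \bar R) (c l : R) :
  (forall x, (1 <= s x)%E) -> 0 < l ->
  (var_norm s (\1_(cube c l) : R -> R) <= (l + 1)%:E)%E.
Proof.
move=> hs1 l0.
apply: ereal_inf_lbound; exists (l + 1) => //; split; first lra.
set lam := l + 1.
have lam0 : 0 < lam by rewrite /lam; lra.
have il0 : 0 < lam^-1 by rewrite invr_gt0.
have il1 : lam^-1 <= 1 by rewrite invr_le1 ?unitfE ?gt_eqF //; rewrite /lam; lra.
rewrite /var_modular.
have -> : 1%E = ((l / lam)%:E + (lam^-1)%:E)%E.
  rewrite -EFinD; congr EFin; rewrite /lam; field; apply/negP => /eqP; lra.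
apply: leeD; last first.
  apply/ess_supP; apply: nearW => x; case: ifP => // _.
    rewrite lee_fin indicE; case: (x \in _); rewrite ?normr1 ?normr0 ?mul0r ?mul1r //.
    exact: ltW.
  by rewrite lee_fin ltW.
have mQ : measurable (cube c l) by rewrite cube_itv.
apply: (le_trans (@le_int_nm _ _ (fun x => (lam^-1 * \1_(cube c l) x)%:E) _ _)).
- by move=> x _; rewrite lee_fin powR_ge0.
- move=> x /= sx; rewrite lee_fin.
  have := hs1 x; move: sx; case: (s x) => [r _ r1 | //| //] /=.
  rewrite lee_fin in r1.
  rewrite indicE; case: (x \in _); rewrite ?normr1 ?normr0 ?mul0r ?mulr1 ?mul1r.
    by apply: ge1r_powR => //; rewrite il0 il1.
  by rewrite /= mulr0 powR0 //; apply/negP => /eqP; lra.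
apply: le_trans (@le_int_sub _ setT _ _ _) _ => //.
  by move=> x _; rewrite lee_fin mulr_ge0 // ltW.
have hk : lam^-1 < 0 -> cube c l = set0 by move=> h; exfalso; lra.
have := @integralZl_indic _ _ _ mu setT measurableT (fun=> cube c l) lam^-1 hk mQ.
move=> /= ->.
have mQl : mu (cube c l) = l%:E.
  rewrite cube_itv lebesgue_measure_itv /= lte_fin ifT; last lra.
  by rewrite -EFinB; congr EFin; lra.
rewrite integral_indic // setIT; set mm := (X in (_ * X <= _)%E); have -> : mm = l%:E by exact: mQl.
rewrite -EFinM lee_fin mulrC.
by rewrite le_eqVlt; apply/orP; left.
Qed.

Lemma var_norm_ge0 (s : R -> \bar R) (f : R -> R) : (0 <= var_norm s f)%E.
Proof.
apply: le_ereal_inf_tmp => _ [lam [l0 _] <-].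
by rewrite lee_fin ltW.
Qed.
End H.

Theorem mainTheorem18 (R : realType) (beta : R) (s : R -> \bar R) (s0 : R) :
  0 < beta ->
  var_exponent s ->
  2 < s0 ->
  (forall x : R, 0 <= x <= 1 -> s x = s0%:E) ->
  ~ in_H s (fun x y => K1 (x - y) * K2 beta y).
Proof.
move=> b0 [_ hs1] s2 hs [C HC].
have := HC 2 2 ltac:(lra) (5/2) (3/2).
have cx : cube 2 (2 / 2) (5 / 2 : R) by rewrite /cube /=; apply/andP; split; lra.
have cz : cube 2 (2 / 2) (3 / 2 : R) by rewrite /cube /=; apply/andP; split; lra.
move=> /(_ cx cz).
pose F := fun m : nat => ((2 ^+ m * 2)%:E
         * var_norm s (fun y => ((K1 (5/2 - y) * K2 beta y - K1 (3/2 - y) * K2 beta y)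
              * \1_(cube 2 (2 ^+ m * 2) `\` cube 2 (2 ^+ m.-1 * 2)) y)%R)
         / var_norm s (\1_(cube 2 (2 ^+ m * 2)) : R -> R))%E.
move=> hC.
have {}hC : (\sum_(1 <= m <oo) F m <= C%:E)%E := hC.
have F0 : forall m, (0 <= F m)%E.
  move=> m; rewrite /F; apply: mule_ge0; last by rewrite inve_ge0 var_norm_ge0.
  by apply: mule_ge0; [rewrite lee_fin mulr_ge0 // exprn_ge0 | exact: var_norm_ge0].
have Finf : F 1%N = +oo%E.
  rewrite /F.
  rewrite (@norm_inf R beta s0 s _ b0 s2 hs); last first.
    move=> y /andP[y0 y2].
    rewrite indicE mem_set /=; last first.
      rewrite /cube expr1 expr0 /=; split; first by apply/andP; split; lra.
      by move=> /andP[h1 h2]; lra.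
    rewrite /K1 ifT; last by apply/andP; split; lra.
    rewrite ifF; last by apply/negP => /andP[h1 h2]; lra.
    by rewrite mul1r mul0r subr0 mulr1.
  have := @norm_ind R s 2 (2 ^+ 1 * 2) hs1 ltac:(rewrite expr1; lra).
  have := @var_norm_ge0 R s (\1_(cube 2 (2 ^+ 1 * 2)) : R -> R).
  case: (var_norm _ _) => [r r0 _| //| //].
  rewrite lee_fin in r0.
  rewrite (@mulry _ (2 ^+ 1 * 2)) gtr0_sg ?mul1e; last by rewrite expr1; lra.
  rewrite inver; case: ifP => // /negbT rn0.
  by rewrite gt0_mulye // lte_fin invr_gt0 lt0r rn0.
have : (F 1%N <= C%:E)%E.
  apply: le_trans hC.
  have := @nneseries_lim_ge R F xpredT 1%N 2%N (fun n _ _ => F0 n).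
  by rewrite big_nat1.
by rewrite Finf leNgt ltey.
Qed.
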